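(* Let $X$ be a topological space with a Borel measure $\mu$, let $\mathcal A$ be the family of $G_\delta$ subsets of $X$ that are $\mu$-null, and let $\mathcal B=\{\{x\}:x\in X\}$. Then One has a winning strategy in $G_1(\mathscr N[\mathcal A],\neg\mathcal O(X,\mathcal B))$ if and only if $X$ is $\mu$-null, i.e., $\mu$ is the zero measure.
   Context: $\mathcal O(X,\mathcal B)$ with $\mathcal B$ the singletons is the set of open covers $\mathscr U$ of $X$ with $X\notin\mathscr U$. $\mathscr N[\mathcal A]=\{\mathscr N(A):A\in\mathcal A\}$ with $\mathscr N(A)$ the set of open $U\neq X$ with $A\subseteq U$; in $G_1(\mathscr N[\mathcal A],\neg\mathcal O(X,\mathcal B))$, at each inning $n\in\omega$ One plays some $A_n\in\mathcal A$, Two answers with an open $U_n\supseteq A_n$, $U_n\neq X$, and One wins iff $\{U_n:n\in\omega\}\in\mathcal O(X,\mathcal B)$. A strategy for One maps finite sequences of Two's moves to moves; it is winning if One wins every play following it. *)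

(* Defs.v *)
From HB Require Import structures.
From mathcomp Require Import all_boot all_order all_algebra.
From mathcomp Require Import all_classical all_reals all_analysis.
From mathcomp Require Import borel_hierarchy.
Set Implicit Arguments. Unset Strict Implicit. Unset Printing Implicit Defensive.
Local Open Scope classical_set_scope.

Notation BorelType T := (g_sigma_algebraType (@open T)).

Definition null_Gdelta (R : realType) (T : ptopologicalType)
  (mu : measure (BorelType T) R) : set (set T) :=
  [set A | Gdelta A /\ mu A = 0%E].

Definition singleton_sets (T : topologicalType) : set (set T) := [set [set x] | x in setT].

Definition O_cover (T : topologicalType) (B : set (set T)) (C : set (set T)) : Prop :=
  (forall V, C V -> open V) /\ ~ C setT /\
  (forall b, B b -> exists2 V, C V & b `<=` V).

Definition Nbhd (T : topologicalType) (A : set T) : set (set T) :=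
  [set U | open U /\ U <> setT /\ A `<=` U].

(* A strategy for One maps finite sequences of Two's moves to One's moves. *)
Definition strategy_One (T : topologicalType) := seq (set T) -> set T.

Definition follows (T : topologicalType) (sigma : strategy_One T) (U : nat -> set T) : Prop :=
  forall n, Nbhd (sigma (mkseq U n)) (U n).

Definition One_wins_G1 (T : topologicalType) (calA calB : set (set T)) : Prop :=
  exists sigma : strategy_One T,
    (forall s, calA (sigma s)) /\
    (forall U, follows sigma U -> O_cover calB (range U)).

(* Main.v *)
Require Import Defs.
From mathcomp Require Import all_boot all_order all_algebra.
From mathcomp Require Import all_classical all_reals all_analysis.
From mathcomp Require Import borel_hierarchy.
Local Open Scope classical_set_scope.

Lemma Gdelta_meas (T : ptopologicalType) (A : set T) :
  Gdelta A -> @measurable _ (BorelType T) A.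
Proof.
case=> F Fo ->; apply: bigcapT_measurable => k.
exact: sub_gen_smallest.
Qed.

Theorem mainTheorem19 (R : realType) (T : ptopologicalType)
  (mu : measure (BorelType T) R) :
  One_wins_G1 (null_Gdelta mu) (@singleton_sets T) <-> mu setT = 0%E.
Proof.
split; last first.
  move=> mu0; exists (fun _ => setT); split.
    by move=> _; split => //; apply: open_Gdelta; exact: openT.
  move=> U /(_ 0%N) [_ [UT TU]]; exfalso; apply: UT.
  by apply/seteqP; split.
case=> sigma [sA swin].
have [//|muT] := eqVneq (mu setT) 0%E.
have [W HW] : {W : set T -> nat -> set T & forall A, Gdelta A ->
    (forall i, open (W A i)) /\ A = \bigcap_i W A i}.
  apply: (@choice _ _ (fun A F => Gdelta A -> (forall i, open (F i)) /\ A = \bigcap_i F i)).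
  move=> A; have [[F Fo FA]|nG] := pselect (Gdelta A).
    by exists F.
  by exists (fun _ => set0).
pose g (ks : seq nat) : seq (set T) :=
  foldl (fun acc k => rcons acc (W (sigma acc) k)) [::] ks.
pose f (n : nat) : set T :=
  if (unpickle n : option (seq nat)) is Some ks then sigma (g ks) else set0.
have fneg : (mu.-negligible (\bigcup_n f n))%E.
  apply: negligible_bigcup => k; rewrite /f.
  case: (unpickle k) => [ks|].
    have [G0 m0] := sA (g ks).
    by exists (sigma (g ks)); split => //; exact: Gdelta_meas.
  by exists set0; split => //; exact: measure0.
case: fneg => M [Mm M0 NM].
have [x Mx] : exists x, ~ M x.
  apply/not_existsP => allM.
  suff E : [set: T] = M by move: muT; rewrite E M0 eqxx.
  by apply/seteqP; split => // y _; have [//|nMy] := pselect (M y); exfalso; exact: (allM y nMy).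
have xs : forall ks, ~ sigma (g ks) x.
  move=> ks sx; apply: Mx; apply: NM; exists (pickle ks) => //.
  by rewrite /f pickleK.
have [c Hc] : {c : seq (set T) -> nat & forall ks,
    ~ W (sigma (g ks)) (c (g ks)) x}.
  have : forall h, exists k, (exists ks, h = g ks) -> ~ W (sigma h) k x.
    move=> h; have [[ks ->]|nh] := pselect (exists ks, h = g ks); last first.
      by exists 0%N => ex; exfalso; apply: nh.
    have [G0 _] := sA (g ks); have [_ E] := HW _ G0.
    have /existsNP [k Hk] : ~ (forall k, W (sigma (g ks)) k x).
      by move=> all; apply: (xs ks); rewrite E => i _; apply: all.
    by exists k.
  case/(@choice _ _ (fun h k => (exists ks, h = g ks) -> ~ W (sigma h) k x)) => c Hc.
  by exists c => ks; apply: Hc; exists ks.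
pose hist := fix hist n := if n is m.+1 then
  rcons (hist m) (W (sigma (hist m)) (c (hist m))) else [::].
pose U n := W (sigma (hist n)) (c (hist n)).
have histg : forall n, exists ks, hist n = g ks.
  elim=> [|n [ks IH]]; first by exists [::].
  exists (rcons ks (c (hist n))).
  by rewrite /g foldl_rcons -/(g ks) -IH.
have histU : forall n, mkseq U n = hist n.
  by elim=> [|n IH] //; rewrite mkseqS IH.
have Ux : forall n, ~ U n x.
  by move=> n; have [ks E] := histg n; rewrite /U E; apply: Hc.
have fol : follows sigma U.
  move=> n; rewrite histU; have [G0 _] := sA (hist n).
  have [Wo E] := HW _ G0; split; first exact: Wo.
  split.
    by move=> eT; apply: (Ux n); rewrite /U -/(U n) eT.
  by rewrite {1}E => y Ey; apply: Ey.
have [_ [_ cov]] := swin U fol.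
have [V [n _ <-] xV] := cov [set x] (ex_intro2 _ _ x I erefl).
by exfalso; apply: (Ux n); apply: xV.
Qed.
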